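(* Consider the generalized nested logit (GNL) model with $K$ nests, nest parameters $0<\lambda_k\le1$ ($k=1,\dots,K$), and allocation parameters $\alpha_{ik}\ge0$ with $\sum_{k=1}^K\alpha_{ik}=1$ for every $i\in A$. Let $T\ge1$, let $u_1,\dots,u_T$ be arbitrary payoff vectors with $\|u_t\|_\infty\le u_{\max}$, and set $$\eta=\sqrt{\frac{\big(\tfrac{2}{\min_k\lambda_k}-1\big)T u_{\max}^2}{2\log N}}.$$ Then the regret of the GNL-SSA satisfies $$R^T_{SSA}\le u_{\max}\sqrt{2\log N\Big(\frac{2}{\min_k\lambda_k}-1\Big)T}.$$
   Context: $N\ge2$, $A=\{1,\dots,N\}$, $\Delta_N=\{x\in\mathbb{R}^N:x_i\ge0,\sum_ix_i=1\}$. The GNL generator is $G(y)=\sum_{k=1}^K\big(\sum_{i=1}^N(\alpha_{ik}y_i)^{1/\lambda_k}\big)^{\lambda_k}$ for $y\in\mathbb{R}^N_+$. Set $\theta_0=0$, $\theta_t=\sum_{s=1}^tu_s$, and $e^{\theta/\eta}=(e^{\theta_1/\eta},\dots,e^{\theta_N/\eta})$. The GNL-SSA chooses $x_t=\nabla\psi_\eta(\theta_{t-1})$, $t=1,\dots,T$, where $\psi_\eta(\theta)=\eta\log G(e^{\theta/\eta})$; equivalently $x_{t,j}=\sum_{k=1}^K P_{k}\,P_{j|k}$ with $P_k=e^{v_k}/\sum_{\ell}e^{v_\ell}$, $v_k=\lambda_k\log\sum_{i}(\alpha_{ik}e^{\theta_{i,t-1}/\eta})^{1/\lambda_k}$, and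 $P_{j|k}=(\alpha_{jk}e^{\theta_{j,t-1}/\eta})^{1/\lambda_k}/\sum_i(\alpha_{ik}e^{\theta_{i,t-1}/\eta})^{1/\lambda_k}$. The regret of a sequence $x_1,\dots,x_T\in\Delta_N$ is $R^T=\max_{x\in\Delta_N}\langle\theta_T,x\rangle-\sum_{t=1}^T\langle u_t,x_t\rangle$. *)

(* Defs.v *)
From mathcomp Require Import all_boot all_order all_algebra.
From mathcomp Require Import all_classical all_reals.
From mathcomp Require Import sequences exp.
Set Implicit Arguments. Unset Strict Implicit. Unset Printing Implicit Defensive.
Import Order.TTheory GRing.Theory Num.Theory.
Local Open Scope ring_scope.

Section GNL.
Variables (R : realType) (N K : nat).
Variables (alpha : 'I_N -> 'I_K -> R) (lam : 'I_K -> R) (eta : R).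

(* cumulative payoff theta_t = sum_{s=1}^t u_s ; payoffs indexed u 1, ..., u T *)
Definition theta (u : nat -> 'I_N -> R) (t : nat) (i : 'I_N) : R :=
  \sum_(1 <= s < t.+1) u s i.

(* S_k(theta) = sum_i (alpha_ik e^{theta_i/eta})^{1/lambda_k};
   e^{v_k} = S_k^{lambda_k} *)
Definition nest_sum (th : 'I_N -> R) (k : 'I_K) : R :=
  \sum_(i < N) powR (alpha i k * expR (th i / eta)) (lam k)^-1.

Definition nest_weight (th : 'I_N -> R) (k : 'I_K) : R :=
  powR (nest_sum th k) (lam k).

Definition P_nest (th : 'I_N -> R) (k : 'I_K) : R :=
  nest_weight th k / \sum_(l < K) nest_weight th l.

Definition P_cond (th : 'I_N -> R) (j : 'I_N) (k : 'I_K) : R :=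
  powR (alpha j k * expR (th j / eta)) (lam k)^-1 / nest_sum th k.

(* GNL choice probabilities = grad psi_eta(theta) *)
Definition gnl_choice (th : 'I_N -> R) (j : 'I_N) : R :=
  \sum_(k < K) P_nest th k * P_cond th j k.

Definition gnl_ssa (u : nat -> 'I_N -> R) (t : nat) : 'I_N -> R :=
  gnl_choice (theta u t.-1).

End GNL.

Definition in_simplex (R : realType) (N : nat) (x : 'I_N -> R) : Prop :=
  (forall i, 0 <= x i) /\ \sum_(i < N) x i = 1.

Definition inner (R : realType) (N : nat) (a b : 'I_N -> R) : R :=
  \sum_(i < N) a i * b i.

Definition regret_le (R : realType) (N T : nat) (u : nat -> 'I_N -> R)
  (xs : nat -> 'I_N -> R) (B : R) : Prop :=
  forall x : 'I_N -> R, in_simplex x ->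
    inner (theta u T) x - \sum_(1 <= t < T.+1) inner (u t) (xs t) <= B.

(* Main.v *)
Require Import Defs.
From mathcomp Require Import all_boot all_order all_algebra.
From mathcomp Require Import all_classical all_reals.
From mathcomp Require Import all_analysis.
From mathcomp Require Import ring lra.
Import Order.TTheory GRing.Theory Num.Theory.
Import numFieldNormedType.Exports.
Set Implicit Arguments. Unset Strict Implicit.
Local Open Scope classical_set_scope.
Local Open Scope ring_scope.

Section Calc.
Variable R : realType.

Lemma cont_of_der (f f1 : R -> R) (a b : R) :
  (forall x : R, is_derive x (1:R) f (f1 x)) -> {within `[a, b], continuous f}.
Proof.
move=> H; apply/continuous_subspaceT=> r.
apply/differentiable_continuous/derivable1_diffP.
by case: (H r).
Qed.

Lemma taylor2 (f f1 f2 : R -> R) (C : R) :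
 (forall x : R, is_derive x (1:R) f (f1 x)) -> (forall x : R, is_derive x (1:R) f1 (f2 x)) ->
 (forall x, 0 <= x <= 1 -> f2 x <= C) -> f 1 <= f 0 + f1 0 + C / 2.
Proof.
move=> Hf Hf1 Hf2.
pose h := (f - (f1 0) *: (@id R) - (C / 2) *: ((@id R) * (@id R)))%R.
pose dh := fun x : R => f1 x - f1 0 - C * x.
have Hh : forall x : R, is_derive x (1:R) h (dh x).
  move=> x; rewrite /h /dh.
  have Hid : is_derive x (1:R) id 1 by apply: is_derive_id.
  have H1 := is_deriveB (Hf x) (is_deriveZ (f1 0) Hid).
  have H2 := is_deriveB H1 (is_deriveZ (C / 2) (is_deriveM Hid Hid)).
  apply: is_derive_eq H2 _.
  rewrite /= -[x%:A]/(x * 1) mulr1 -[(f1 0) *: 1]/((f1 0) * 1) mulr1.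
  rewrite -[(C / 2) *: _]/((C/2) * _).
  by rewrite mulrDr -mulrDl -splitr.
have [c c01 hc] := MVT_segment (@ler01 R) (fun x _ => Hh x) (@cont_of_der _ _ 0 1 Hh).
have c0 : 0 <= c by move: c01; rewrite in_itv /= => /andP[].
have c1 : c <= 1 by move: c01; rewrite in_itv /= => /andP[].
pose g := (f1 - C *: (@id R))%R.
pose dg := fun x : R => f2 x - C.
have Hg : forall x : R, is_derive x (1:R) g (dg x).
  move=> x; rewrite /g /dg.
  have H2 := is_deriveB (Hf1 x) (is_deriveZ C (is_derive_id x 1)).
  apply: is_derive_eq H2 _.
  by rewrite -[C *: 1]/(C * 1) mulr1.
have [d d0c gd] := MVT_segment c0 (fun x _ => Hg x) (@cont_of_der _ _ 0 c Hg).
have d0 : 0 <= d by move: d0c; rewrite in_itv /= => /andP[].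
have dc : d <= c by move: d0c; rewrite in_itv /= => /andP[].
have : dg d * (c - 0) <= 0.
  apply: mulr_le0_ge0; last by rewrite subr0.
  rewrite /dg subr_le0; apply: Hf2; rewrite d0 /=; exact: le_trans dc c1.
rewrite -gd /g /= => H1.
have H0 : h 1 - h 0 <= 0.
  rewrite hc subr0 mulr1 /dh.
  have H1' : (f1 c - C * c) - (f1 0 - C * 0) <= 0 := H1.
  lra.
have H3 : (f 1 - f1 0 * 1 - C / 2 * (1 * 1)) - (f 0 - f1 0 * 0 - C / 2 * (0 * 0)) <= 0 := H0.
lra.
Qed.

Lemma der_sum n (F : 'I_n -> R -> R) (dF : 'I_n -> R) x :
  (forall k, is_derive x (1:R) (F k) (dF k)) ->
  is_derive x (1:R) (fun s => \sum_(k < n) F k s) (\sum_(k < n) dF k).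
Proof. by move=> H; rewrite -fct_sumE; apply: is_derive_sum. Qed.

Lemma der_mul (f g : R -> R) df dg x :
  is_derive x (1:R) f df -> is_derive x (1:R) g dg ->
  is_derive x (1:R) (fun s => f s * g s) (f x * dg + g x * df).
Proof. by move=> Hf Hg; have := is_deriveM Hf Hg. Qed.

Lemma der_scal (f : R -> R) df a x :
  is_derive x (1:R) f df -> is_derive x (1:R) (fun s => a * f s) (a * df).
Proof. by move=> Hf; have := is_deriveZ a Hf. Qed.

Lemma der_lin a x : is_derive x (1:R) (fun s => s * a) a.
Proof.
have H := is_deriveZ a (is_derive_id x (1:R)).
have E : (fun s : R => s * a) = (a *: (@id R)) by apply/funext => s /=; rewrite mulrC.
by rewrite E; apply: is_derive_eq H _; rewrite -[a *: 1]/(a * 1) mulr1.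
Qed.

Lemma der_exp (f : R -> R) df x :
  is_derive x (1:R) f df -> is_derive x (1:R) (fun s => expR (f s)) (expR (f x) * df).
Proof.
move=> Hf; have := @is_derive1_comp R (@expR R) f x _ _ (is_derive_expR (f x)) Hf.
by [].
Qed.

Lemma der_ln (f : R -> R) df x : 0 < f x ->
  is_derive x (1:R) f df -> is_derive x (1:R) (fun s => ln (f s)) (df / f x).
Proof.
move=> fx Hf; have := @is_derive1_comp R (@ln R) f x _ _ (is_derive1_ln fx) Hf.
by rewrite mulrC.
Qed.

Lemma der_inv (f : R -> R) df x : f x != 0 ->
  is_derive x (1:R) f df -> is_derive x (1:R) (fun s => (f s)^-1) (- (f x) ^- 2 * df).
Proof. by move=> fx Hf; have := is_deriveV fx Hf. Qed.

End Calc.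

Section Core.
Variables (R : realType) (N K : nat) (q : 'I_K -> R) (pi : 'I_N -> 'I_K -> R)
  (lam : 'I_K -> R) (c : 'I_N -> R) (M l : R).
Hypotheses (q0 : forall k, 0 <= q k) (q1 : \sum_(k < K) q k = 1)
  (pi0 : forall i k, 0 <= pi i k) (pi1 : forall k, \sum_(i < N) pi i k = 1)
  (lam0 : forall k, 0 < lam k) (lam1 : forall k, lam k <= 1)
  (l0 : 0 < l) (llam : forall k, l <= lam k) (cM : forall i, `|c i| <= M).

Definition Ek k (s : R) := \sum_(i < N) pi i k * expR (s * (c i / lam k)).
Definition Tk k (s : R) := \sum_(i < N) pi i k * (c i * expR (s * (c i / lam k))).
Definition Uk k (s : R) := \sum_(i < N) pi i k * (c i ^+ 2 * expR (s * (c i / lam k))).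
Definition Wk k (s : R) := expR (lam k * ln (Ek k s)).
Definition Bf (s : R) := \sum_(k < K) q k * Wk k s.
Definition Af (s : R) := \sum_(k < K) q k * (Wk k s * (Tk k s / Ek k s)).
Definition Ff (s : R) := ln (Bf s).
Definition F1 (s : R) := Af s / Bf s.
Definition dA (s : R) := \sum_(k < K) q k * (Wk k s * (Tk k s / Ek k s) * (Tk k s / Ek k s)
   + Wk k s * (Uk k s / lam k / Ek k s - Tk k s * Tk k s / lam k / (Ek k s) ^+ 2)).
Definition F2 (s : R) := dA s / Bf s - (Af s / Bf s) ^+ 2.

Lemma lam_neq0 k : lam k != 0. Proof. by rewrite gt_eqF. Qed.

Lemma Ek_gt0 k s : 0 < Ek k s.
Proof.
rewrite /Ek lt_def sumr_ge0 ?andbT; last by move=> i _; rewrite mulr_ge0 ?expR_ge0.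
apply/negP => /eqP/psumr_eq0P H.
have {}H := H (fun i _ => mulr_ge0 (pi0 i k) (expR_ge0 _)).
have : \sum_(i < N) pi i k = 0.
  apply: big1 => i _.
  have /eqP := H i isT.
  by rewrite mulf_eq0 (gt_eqF (expR_gt0 _)) orbF => /eqP.
by rewrite pi1 => /eqP; rewrite oner_eq0.
Qed.

Lemma Bf_gt0 s : 0 < Bf s.
Proof.
rewrite /Bf lt_def sumr_ge0 ?andbT; last by move=> k _; rewrite mulr_ge0 ?expR_ge0.
apply/negP => /eqP/psumr_eq0P H.
have {}H := H (fun k _ => mulr_ge0 (q0 k) (expR_ge0 _)).
have : \sum_(k < K) q k = 0.
  apply: big1 => k _.
  have /eqP := H k isT.
  by rewrite mulf_eq0 (gt_eqF (expR_gt0 _)) orbF => /eqP.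
by rewrite q1 => /eqP; rewrite oner_eq0.
Qed.

Lemma dEk k x : is_derive x (1:R) (Ek k) (Tk k x / lam k).
Proof.
have H := der_sum (fun i => der_scal (pi i k) (der_exp (der_lin (c i / lam k) x))).
apply: is_derive_eq H _.
rewrite /Tk mulr_suml; apply: eq_bigr => i _.
rewrite -mulrA; congr (_ * _).
by rewrite mulrC mulrAC.
Qed.


Lemma dTk k x : is_derive x (1:R) (Tk k) (Uk k x / lam k).
Proof.
have H := der_sum (fun i => der_scal (pi i k) (der_scal (c i) (der_exp (der_lin (c i / lam k) x)))).
apply: is_derive_eq H _.
rewrite /Uk mulr_suml; apply: eq_bigr => i _.
rewrite -mulrA; congr (_ * _).
by rewrite expr2; field; rewrite lam_neq0.
Qed.

Lemma dWk k x : is_derive x (1:R) (Wk k) (Wk k x * (Tk k x / Ek k x)).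
Proof.
have H := der_exp (der_scal (lam k) (der_ln (Ek_gt0 k x) (dEk k x))).
apply: is_derive_eq H _.
rewrite /Wk; congr (_ * _).
by field; rewrite lam_neq0 gt_eqF ?Ek_gt0.
Qed.

Lemma dBf x : is_derive x (1:R) Bf (Af x).
Proof.
have H := der_sum (fun k => der_scal (q k) (dWk k x)).
exact: H.
Qed.

Lemma dFf x : is_derive x (1:R) Ff (F1 x).
Proof.
have H := der_ln (Bf_gt0 x) (dBf x).
exact: H.
Qed.

Lemma dAf x : is_derive x (1:R) Af (dA x).
Proof.
have HE k : Ek k x != 0 by rewrite gt_eqF ?Ek_gt0.
have H := der_sum (fun k => der_scal (q k) (der_mul (dWk k x)
   (der_mul (dTk k x) (der_inv (HE k) (dEk k x))))).
apply: is_derive_eq H _.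
rewrite /dA; apply: eq_bigr => k _; congr (_ * _).
have := HE k; have := lam_neq0 k; move: (Ek k x) (lam k) => e a ha he.
by rewrite !expr2; field; rewrite ha he.
Qed.

Lemma dF1 x : is_derive x (1:R) F1 (F2 x).
Proof.
have HB : Bf x != 0 by rewrite gt_eqF ?Bf_gt0.
have H := der_mul (dAf x) (der_inv HB (dBf x)).
apply: is_derive_eq H _.
rewrite /F2; move: HB; move: (Bf x) (Af x) (dA x) => b a d hb.
by field.
Qed.


Lemma Uk_le k x : Uk k x <= M ^+ 2 * Ek k x.
Proof.
rewrite /Uk /Ek mulr_sumr; apply: ler_sum => i _.
rewrite mulrCA; apply: ler_wpM2r; first by rewrite mulr_ge0 ?expR_ge0.
have h1 := cM i; have h2 : 0 <= `|c i| by [].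
rewrite -real_normK ?num_real //; nra.
Qed.

Lemma F2_le x : F2 x <= M ^+ 2 / l.
Proof.
have HB := Bf_gt0 x.
rewrite /F2; apply: le_trans (_ : dA x / Bf x <= _).
  by rewrite lerBlDr lerDl sqr_ge0.
rewrite ler_pdivrMr //.
rewrite /Bf mulr_sumr; apply: ler_sum => k _.
rewrite [in X in _ <= X]mulrCA; apply: ler_wpM2l; first exact: q0.
have HE := Ek_gt0 k x; have HW : 0 < Wk k x by apply: expR_gt0.
have Ha := lam0 k; have Ha1 := lam1 k; have Hla := llam k.
have HU := Uk_le k x.
have hU0 : 0 <= Uk k x.
  rewrite /Uk sumr_ge0 // => i _.
  by rewrite mulr_ge0 ?pi0 // mulr_ge0 ?sqr_ge0 ?expR_ge0.
set W := Wk k x; set E := Ek k x; set T := Tk k x; set U := Uk k x; set a := lam k.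
have -> : W * (T / E) * (T / E) + W * (U / a / E - T * T / a / E ^+ 2) =
   W * ((T / E) * (T / E) + (U / E) * a^-1 - (T / E) * (T / E) * a^-1).
  by field; rewrite gt_eqF // gt_eqF.
rewrite mulrC; apply: ler_wpM2r; first exact: ltW.
set r := T / E; set v := U / E.
have hv : v <= M ^+ 2 by rewrite /v ler_pdivrMr.
have hv0 : 0 <= v.
  by rewrite /v divr_ge0 // ltW.
have hia : 1 <= a^-1 by rewrite invf_ge1.
have hial : a^-1 <= l^-1 by rewrite lef_pV2 ?posrE.
have hM : 0 <= M ^+ 2 by rewrite sqr_ge0.
have h1 : 0 <= r * r * (a^-1 - 1) by rewrite mulr_ge0 ?subr_ge0 // -expr2 sqr_ge0.
have h2 : v * a^-1 <= M ^+ 2 * l^-1.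
  apply: le_trans (_ : M ^+ 2 * a^-1 <= _).
    by apply: ler_wpM2r => //; apply: le_trans hia.
  by apply: ler_wpM2l.
move: h1 h2; rewrite !mulrBr; lra.
Qed.

Lemma Ek0 k : Ek k 0 = 1.
Proof. by rewrite /Ek -[RHS](pi1 k); apply: eq_bigr => i _; rewrite mul0r expR0 mulr1. Qed.

Lemma Bf0 : Bf 0 = 1.
Proof. by rewrite /Bf -q1; apply: eq_bigr => k _; rewrite /Wk Ek0 ln1 mulr0 expR0 mulr1. Qed.

Lemma core_bound :
  ln (\sum_(k < K) q k * expR (lam k * ln (\sum_(i < N) pi i k * expR (c i / lam k))))
  <= \sum_(k < K) q k * \sum_(i < N) pi i k * c i + M ^+ 2 / l / 2.
Proof.
have H := taylor2 dFf dF1 (fun x _ => F2_le x).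
have E1 : Ff 1 = ln (\sum_(k < K) q k * expR (lam k * ln (\sum_(i < N) pi i k * expR (c i / lam k)))).
  rewrite /Ff /Bf /Wk /Ek; congr ln; apply: eq_bigr => k _.
  congr (_ * expR (_ * ln _)); apply: eq_bigr => i _; by rewrite mul1r.
rewrite -E1; apply: le_trans H _.
rewrite /Ff Bf0 ln1 add0r /F1 Bf0 divr1 lerD2r /Af.
rewrite le_eqVlt; apply/orP; left; apply/eqP.
apply: eq_bigr => k _; rewrite /Wk Ek0 ln1 mulr0 expR0 mul1r divr1 /Tk.
congr (_ * _); apply: eq_bigr => i _; by rewrite mul0r expR0 mulr1.
Qed.

End Core.

Lemma term_le (R : realType) n (F : 'I_n -> R) j :
  (forall i, 0 <= F i) -> F j <= \sum_(i < n) F i.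
Proof.
by move=> H; rewrite (bigD1 j) //= lerDl sumr_ge0 // => i _.
Qed.

Lemma powR_inv_cancel (R : realType) (z a : R) : 0 <= z -> 0 < a ->
  powR (powR z a^-1) a = z.
Proof. by move=> z0 a0; rewrite -powRrM mulVf ?gt_eqF // powRr1. Qed.

Lemma sum_powR_le (R : realType) n (a : 'I_n -> R) p : 1 <= p ->
  (forall i, 0 <= a i) -> \sum_(i < n) powR (a i) p <= powR (\sum_(i < n) a i) p.
Proof.
move=> p1 a0.
have p0 : p != 0 by rewrite gt_eqF // (lt_le_trans ltr01).
have s0 : 0 <= \sum_(i < n) a i by apply: sumr_ge0.
have [se|sn] := eqVneq (\sum_(i < n) a i) 0.
  have /psumr_eq0P H := se.
  rewrite big1 ?powR_ge0 // => i _.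
  by rewrite H // powR0.
set s := \sum_(i < n) a i in s0 sn *.
have sp : 0 < s by rewrite lt_def sn.
have E i : powR (a i) p = powR s p * powR (a i / s) p.
  by rewrite -powRM ?divr_ge0 // mulrC divfK.
rewrite (eq_bigr _ (fun i _ => E i)) -mulr_sumr.
rewrite -[X in _ <= X]mulr1 ler_wpM2l ?powR_ge0 //.
apply: le_trans (_ : \sum_(i < n) a i / s <= _); last by rewrite -mulr_suml divff.
apply: ler_sum => i _.
have [ai0|ain] := eqVneq (a i) 0.
  by rewrite ai0 mul0r powR0.
apply: ge1r_powR => //.
rewrite divr_gt0 // ?lt_def ?ain ?a0 //=.
by rewrite ler_pdivrMr // mul1r /s term_le.
Qed.

Section GNLB.
Variables (R : realType) (N K : nat) (alpha : 'I_N -> 'I_K -> R) (lam : 'I_K -> R) (eta : R).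
Hypotheses (lam0 : forall k, 0 < lam k) (lam1 : forall k, lam k <= 1)
  (alpha0 : forall i k, 0 <= alpha i k) (alpha1 : forall i, \sum_(k < K) alpha i k = 1).

Definition Gs (th : 'I_N -> R) := \sum_(k < K) nest_weight alpha lam eta th k.

Lemma G_ge th j : expR (th j / eta) <= Gs th.
Proof.
apply: le_trans (_ : \sum_(k < K) alpha j k * expR (th j / eta) <= _).
  by rewrite -mulr_suml alpha1 mul1r.
apply: ler_sum => k _; rewrite /nest_weight /nest_sum.
rewrite -[X in X <= _](@powR_inv_cancel _ _ (lam k)) ?mulr_ge0 ?expR_ge0 //.
apply: (ge0_ler_powR (ltW (lam0 k))).
- by rewrite nnegrE powR_ge0.
- by rewrite nnegrE sumr_ge0 // => i _; rewrite powR_ge0.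
- have := @term_le R N (fun i => powR (alpha i k * expR (th i / eta)) (lam k)^-1) j.
  by apply => i; rewrite powR_ge0.
Qed.

Lemma G_pos th : (0 < N)%N -> 0 < Gs th.
Proof. by move=> N0; apply: lt_le_trans (G_ge th (Ordinal N0)); apply: expR_gt0. Qed.

Lemma Psi_ge th j : (0 < N)%N -> th j / eta <= ln (Gs th).
Proof.
move=> N0; rewrite -{1}(expRK (th j / eta)) ler_ln ?posrE ?expR_gt0 ?G_pos //.
exact: G_ge.
Qed.

Lemma G0_le th : (forall i, th i = 0) -> Gs th <= N%:R.
Proof.
move=> th0.
have HS : \sum_(k < K) \sum_(i < N) alpha i k = N%:R.
  rewrite exchange_big /= (eq_bigr (fun=> 1)) ?sumr_const ?card_ord //.
rewrite -HS.
apply: ler_sum => k _; rewrite /nest_weight /nest_sum.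
rewrite -[X in _ <= X](@powR_inv_cancel _ _ (lam k)) ?sumr_ge0 //.
apply: (ge0_ler_powR (ltW (lam0 k))); rewrite ?nnegrE ?powR_ge0 ?sumr_ge0 //.
  by move=> i _; rewrite powR_ge0.
rewrite (eq_bigr (fun i => powR (alpha i k) (lam k)^-1)); last first.
  by move=> i _; rewrite th0 mul0r expR0 mulr1.
by apply: sum_powR_le; rewrite // invf_ge1.
Qed.

Lemma Psi0_le th : (0 < N)%N -> (forall i, th i = 0) -> ln (Gs th) <= ln N%:R.
Proof.
move=> N0 th0; rewrite ler_ln ?posrE ?G_pos ?ltr0n //.
exact: G0_le.
Qed.

End GNLB.


Lemma sum_exp_pos (R : realType) n (p z : 'I_n -> R) :
  (forall i, 0 <= p i) -> \sum_(i < n) p i = 1 -> 0 < \sum_(i < n) p i * expR (z i).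
Proof.
move=> p0 p1.
rewrite lt_def sumr_ge0 ?andbT; last by move=> i _; rewrite mulr_ge0 ?expR_ge0.
apply/negP => /eqP/psumr_eq0P H.
have {}H := H (fun i _ => mulr_ge0 (p0 i) (expR_ge0 _)).
have : \sum_(i < n) p i = 0.
  apply: big1 => i _.
  have /eqP := H i isT.
  by rewrite mulf_eq0 (gt_eqF (expR_gt0 _)) orbF => /eqP.
by rewrite p1 => /eqP; rewrite oner_eq0.
Qed.

Section GNLS.
Variables (R : realType) (N K : nat) (alpha : 'I_N -> 'I_K -> R) (lam : 'I_K -> R) (eta l : R).
Hypotheses (lam0 : forall k, 0 < lam k) (lam1 : forall k, lam k <= 1)
  (alpha0 : forall i k, 0 <= alpha i k) (alpha1 : forall i, \sum_(k < K) alpha i k = 1)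
  (N0 : (0 < N)%N) (eta0 : 0 < eta) (l0 : 0 < l) (llam : forall k, l <= lam k).

Lemma step (th v : 'I_N -> R) (m : R) : (forall i, `|v i| <= m) ->
  ln (Gs alpha lam eta (fun i => th i + v i)) <=
  ln (Gs alpha lam eta th) + \sum_(j < N) gnl_choice alpha lam eta th j * (v j / eta)
  + (m / eta) ^+ 2 / l / 2.
Proof.
move=> vm.
pose S k := nest_sum alpha lam eta th k.
pose a i k := powR (alpha i k * expR (th i / eta)) (lam k)^-1.
pose pi i k := if S k == 0 then N%:R^-1 else a i k / S k.
pose c i := v i / eta.
pose W k := nest_weight alpha lam eta th k.
pose G := Gs alpha lam eta th.
pose q k := W k / G.
pose E k := \sum_(i < N) pi i k * expR (c i / lam k).
have a0 i k : 0 <= a i k by apply: powR_ge0.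
have S0 k : 0 <= S k by apply: sumr_ge0 => i _; apply: powR_ge0.
have Gpos : 0 < G by apply: G_pos.
have pi0 i k : 0 <= pi i k.
  rewrite /pi; case: ifP => _; first by rewrite invr_ge0 ler0n.
  by rewrite divr_ge0.
have pi1 k : \sum_(i < N) pi i k = 1.
  have [Sk|Sk] := eqVneq (S k) 0; rewrite /pi.
    by rewrite Sk eqxx sumr_const card_ord -[_ *+ N]mulr_natr mulVf // pnatr_eq0 -lt0n.
  by rewrite (negbTE Sk) -mulr_suml divff.
have Epos k : 0 < E k by apply: sum_exp_pos.
have Hterm i k : powR (alpha i k * expR ((th i + v i) / eta)) (lam k)^-1
    = a i k * expR (c i / lam k).
  rewrite mulrDl expRD mulrA powRM ?mulr_ge0 ?expR_ge0 // -expRM.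
  by [].
have HS k : nest_sum alpha lam eta (fun i => th i + v i) k = S k * E k.
  rewrite /nest_sum (eq_bigr _ (fun i _ => Hterm i k)).
  have [Sk|Sk] := eqVneq (S k) 0.
    have H := psumr_eq0P (fun j _ => a0 j k) Sk.
    rewrite Sk mul0r big1 // => i _.
    by rewrite [a i k]H ?mul0r.
  rewrite /E mulr_sumr; apply: eq_bigr => i _.
  by rewrite /pi (negbTE Sk) mulrA mulrCA divff // mulr1.
have HW k : nest_weight alpha lam eta (fun i => th i + v i) k
    = W k * expR (lam k * ln (E k)).
  rewrite /nest_weight HS (powRM _ (S0 k) (ltW (Epos k))).
  by rewrite /W /nest_weight {2}/powR (gt_eqF (Epos k)).
have HG : Gs alpha lam eta (fun i => th i + v i) =
    G * \sum_(k < K) q k * expR (lam k * ln (E k)).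
  rewrite /Gs (eq_bigr _ (fun k _ => HW k)) mulr_sumr; apply: eq_bigr => k _.
  by rewrite /q mulrA mulrCA divff ?gt_eqF // mulr1.
have Ypos : 0 < \sum_(k < K) q k * expR (lam k * ln (E k)).
  have : 0 < Gs alpha lam eta (fun i => th i + v i) by apply: G_pos.
  by rewrite HG pmulr_rgt0.
rewrite HG lnM ?posrE // -addrA lerD2l.
have q0 k : 0 <= q k by rewrite /q divr_ge0 // ?(ltW Gpos) //; apply: powR_ge0.
have q1 : \sum_(k < K) q k = 1 by rewrite -mulr_suml divff ?gt_eqF.
have cM i : `|c i| <= m / eta.
  by rewrite /c normrM normfV (gtr0_norm eta0) ler_pM2r ?invr_gt0.
have := core_bound q0 q1 pi0 pi1 lam0 lam1 l0 llam cM.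
move=> H; apply: le_trans H _; rewrite lerD2r.
have Hqp k i : q k * pi i k = q k * (a i k / S k).
  have [Sk|Sk] := eqVneq (S k) 0; last by rewrite /pi (negbTE Sk).
  have -> : q k = 0.
    by rewrite /q /W /nest_weight -/(S k) Sk powR0 ?mul0r // gt_eqF.
  by rewrite !mul0r.
rewrite le_eqVlt; apply/orP; left; apply/eqP.
under eq_bigr do rewrite mulr_sumr.
rewrite exchange_big /=; apply: eq_bigr => j _.
rewrite /gnl_choice mulr_suml; apply: eq_bigr => k _.
rewrite mulrA Hqp.
by [].
Qed.

End GNLS.


Lemma theta0 (R : realType) N (u : nat -> 'I_N -> R) i : theta u 0 i = 0.
Proof. by rewrite /theta big_geq. Qed.

Lemma thetaS (R : realType) N (u : nat -> 'I_N -> R) n :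
  theta u n.+1 = (fun i => theta u n i + u n.+1 i).
Proof. by apply/funext => i; rewrite /theta big_nat_recr. Qed.

Lemma arith1 (R : realType) (a b s x d m : R) :
  a <= b + s + m * d -> a + x + d <= b + (s + x) + (m * d + d).
Proof. move=> h; lra. Qed.

Section Tele.
Variables (R : realType) (N K T : nat) (alpha : 'I_N -> 'I_K -> R) (lam : 'I_K -> R) (eta l : R)
  (u : nat -> 'I_N -> R) (umax : R).
Hypotheses (lam0 : forall k, 0 < lam k) (lam1 : forall k, lam k <= 1)
  (alpha0 : forall i k, 0 <= alpha i k) (alpha1 : forall i, \sum_(k < K) alpha i k = 1)
  (N0 : (0 < N)%N) (eta0 : 0 < eta) (l0 : 0 < l) (llam : forall k, l <= lam k)
  (uB : forall t i, (1 <= t <= T)%N -> `|u t i| <= umax).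

Lemma tele n : (n <= T)%N ->
  ln (Gs alpha lam eta (theta u n)) <= ln (Gs alpha lam eta (theta u 0))
   + \sum_(1 <= t < n.+1) inner (u t) (gnl_ssa alpha lam eta u t) / eta
   + n%:R * ((umax / eta) ^+ 2 / l / 2).
Proof.
elim: n => [|n IH] nT.
  by rewrite big_geq // mul0r !addr0.
have IH' := IH (ltnW nT).
have Hs := step lam0 lam1 alpha0 alpha1 N0 eta0 l0 llam
  (theta u n) (fun i => @uB n.+1 i nT).
rewrite thetaS; apply: le_trans Hs _.
rewrite big_nat_recr //=.
have -> : (n.+1)%:R = n%:R + 1 :> R by rewrite mulrSr.
rewrite mulrDl mul1r.
have -> : \sum_(j < N) gnl_choice alpha lam eta (theta u n) j * (u n.+1 j / eta)
   = inner (u n.+1) (gnl_ssa alpha lam eta u n.+1) / eta.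
  rewrite /inner mulr_suml; apply: eq_bigr => j _.
  have -> : gnl_ssa alpha lam eta u n.+1 = gnl_choice alpha lam eta (theta u n) by [].
  by rewrite mulrA (mulrC (gnl_choice _ _ _ _ j)).
exact: arith1.
Qed.
End Tele.

Lemma final_arith (R : realType) (L c T lm um : R) : 0 < L -> 0 < lm -> lm^-1 <= c ->
  0 < T -> 0 < um ->
  Num.sqrt (c * T * um ^+ 2 / (2 * L)) * L
  + Num.sqrt (c * T * um ^+ 2 / (2 * L)) * (T * ((um / Num.sqrt (c * T * um ^+ 2 / (2 * L))) ^+ 2 / lm / 2))
  <= um * Num.sqrt (2 * L * c * T).
Proof.
move=> L0 lm0 lmc T0 um0.
set eta := Num.sqrt (c * T * um ^+ 2 / (2 * L)).
have c0 : 0 < c by apply: lt_le_trans lmc; rewrite invr_gt0.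
have Q0 : 0 < c * T * um ^+ 2 / (2 * L).
  by rewrite divr_gt0 ?mulr_gt0 ?exprn_gt0.
have eta0 : 0 < eta by rewrite sqrtr_gt0.
have E2 : eta ^+ 2 = c * T * um ^+ 2 / (2 * L) by rewrite sqr_sqrtr // ltW.
have etan : eta != 0 by rewrite gt_eqF.
have lmn : lm != 0 by rewrite gt_eqF.
have Ln : L != 0 by rewrite gt_eqF.
set A := T * um ^+ 2 / 2 / eta.
have A0 : 0 <= A by rewrite /A !divr_ge0 ?mulr_ge0 ?sqr_ge0 // ltW.
have H1 : eta * (T * ((um / eta) ^+ 2 / lm / 2)) = A * lm^-1.
  by rewrite /A; field; rewrite etan lmn.
have E3 : c * T * um ^+ 2 = eta ^+ 2 * (2 * L).
  by rewrite E2 divfK // mulf_neq0 // pnatr_eq0.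
have H2 : eta * L = A * c.
  rewrite (_ : A * c = c * T * um ^+ 2 / 2 / eta); last by rewrite /A; field.
  by rewrite E3; field.
have H4 : 2 * (eta * L) = um * Num.sqrt (2 * L * c * T).
  have H5 : (2 * (eta * L)) ^+ 2 = um ^+ 2 * (2 * L * c * T).
    by rewrite !exprMn E2; field.
  rewrite -[LHS]ger0_norm ?mulr_ge0 ?ltW // -sqrtr_sqr H5 sqrtrM ?sqr_ge0 //.
  by rewrite sqrtr_sqr gtr0_norm.
rewrite H1 -H4.
have : A * lm^-1 <= A * c by apply: ler_wpM2l.
move: H2; set a := eta * L; set b := A * lm^-1; set d := A * c.
move=> H2 H3; lra.
Qed.

Lemma bigmin_gt0 (R : realType) K (lam : 'I_K -> R) : (forall k, 0 < lam k) ->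
  0 < \big[Num.min/1]_(k < K) lam k.
Proof.
move=> H; apply: (big_ind (fun x => 0 < x)); first exact: ltr01.
  by move=> x y hx hy; rewrite lt_min hx hy.
by move=> i _.
Qed.

Lemma bigmin_le (R : realType) K (lam : 'I_K -> R) k :
  \big[Num.min/1]_(k < K) lam k <= lam k.
Proof. by rewrite (bigD1 k) //= ge_min lexx. Qed.

Lemma bigmin_le1 (R : realType) K (lam : 'I_K -> R) : (forall k, lam k <= 1) ->
  \big[Num.min/1]_(k < K) lam k <= 1.
Proof.
move=> H; apply: (big_ind (fun x => x <= 1)) => //.
by move=> x y hx hy; rewrite ge_min hx.
Qed.


Lemma arith2 (R : realType) (eta G G0 L S S' D I : R) : 0 < eta -> S' = S / eta ->
  G <= G0 + S' + D -> G0 <= L -> I <= eta * G -> I - S <= eta * L + eta * D.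
Proof.
move=> e0 -> h1 h2 h3.
have h4 : eta * G <= eta * (L + S / eta + D).
  by apply: ler_wpM2l; [exact: ltW | lra].
have h5 : eta * (L + S / eta + D) = eta * L + S + eta * D.
  by rewrite !mulrDr mulrCA divff ?mulr1 // gt_eqF.
move: (le_trans h3 h4); rewrite h5 => h; lra.
Qed.

Unset Implicit Arguments.
Local Open Scope ring_scope.

Theorem proposition2 (R : realType) (N K T : nat)
  (alpha : 'I_N -> 'I_K -> R) (lam : 'I_K -> R)
  (u : nat -> 'I_N -> R) (umax : R) :
  (2 <= N)%N -> (1 <= K)%N -> (1 <= T)%N ->
  (forall k, 0 < lam k <= 1) ->
  (forall i k, 0 <= alpha i k) ->
  (forall i, \sum_(k < K) alpha i k = 1) ->
  (forall t i, (1 <= t <= T)%N -> `|u t i| <= umax) ->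
  let lmin := \big[Num.min/1]_(k < K) lam k in
  let eta := Num.sqrt (((2 / lmin - 1) * T%:R * umax ^+ 2) / (2 * ln N%:R)) in
  regret_le T u (gnl_ssa alpha lam eta u)
    (umax * Num.sqrt (2 * ln N%:R * (2 / lmin - 1) * T%:R)).
Proof.
move=> N2 K1 T1 hlam halpha halpha1 hu lmin eta x [x0 x1].
have N0 : (0 < N)%N by apply: leq_trans N2.
have lam0 k : 0 < lam k by case/andP: (hlam k).
have lam1 k : lam k <= 1 by case/andP: (hlam k).
have um0 : 0 <= umax.
  apply: le_trans (hu 1%N (Ordinal N0) _); first exact: normr_ge0.
  by rewrite leqnn T1.
have lm0 : 0 < lmin by apply: bigmin_gt0.
have lmle k : lmin <= lam k by apply: bigmin_le.
have lm1 : lmin <= 1 by apply: bigmin_le1.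
have [um_eq|um_ne] := eqVneq umax 0.
  have u0 t i : (1 <= t <= T)%N -> u t i = 0.
    by move=> ht; apply/eqP; rewrite -normr_le0 -um_eq hu.
  have th0 i : theta u T i = 0.
    rewrite /theta big_nat_cond big1 // => s /andP[hs _].
    exact: u0.
  have S0 : \sum_(1 <= t < T.+1) inner (u t) (gnl_ssa alpha lam eta u t) = 0.
    rewrite big_nat_cond big1 // => s /andP[hs _].
    by rewrite /inner big1 // => i _; rewrite u0 // mul0r.
  rewrite S0 /inner big1 ?um_eq ?mul0r ?subr0 // => i _.
  by rewrite th0 mul0r.
have um_pos : 0 < umax by rewrite lt_def um_ne.
set c := 2 / lmin - 1 in eta *.
set L := ln N%:R in eta *.
have L0 : 0 < L by apply: ln_gt0; rewrite ltr1n.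
have hc : lmin^-1 <= c.
  have : 1 <= lmin^-1 by rewrite invf_ge1.
  by rewrite /c; lra.
have c0 : 0 < c by apply: lt_le_trans hc; rewrite invr_gt0.
have T0 : 0 < T%:R :> R by rewrite ltr0n.
have eta0 : 0 < eta.
  by rewrite /eta sqrtr_gt0 divr_gt0 ?mulr_gt0 ?exprn_gt0.
have Htele := tele lam0 lam1 halpha halpha1 N0 eta0 lm0 lmle hu (leqnn T).
have H0 := Psi0_le eta lam0 lam1 halpha halpha1 N0 (theta0 u).
have Hin : inner (theta u T) x <= eta * ln (Gs alpha lam eta (theta u T)).
  rewrite /inner -[X in _ <= X]mulr1 -x1 mulr_sumr; apply: ler_sum => j _.
  apply: ler_wpM2r; first exact: x0.
  rewrite mulrC -ler_pdivrMr //; exact: Psi_ge.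
have HS : \sum_(1 <= t < T.+1) inner (u t) (gnl_ssa alpha lam eta u t) / eta
   = (\sum_(1 <= t < T.+1) inner (u t) (gnl_ssa alpha lam eta u t)) / eta.
  by rewrite mulr_suml.
have H2 := arith2 eta0 HS Htele H0 Hin.
apply: le_trans H2 _.
exact: (final_arith L0 lm0 hc T0 um_pos).
Qed.
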